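(* Let $a,r$ be positive integers and let $a_n=a+(n-1)r$ for $n\ge 1$. Then the sequence $(\Gamma(a_n,a_{n+1}))_{n\ge 1}$ is either $1,2,1,2,\ldots$ or $2,1,2,1,\ldots$.
   Context: For relatively prime positive integers $p,q$, exactly one of the equations $px+qy=\frac{(p-1)(q-1)}{2}$ (Equation 1) and $px+qy+1=\frac{(p-1)(q-1)}{2}$ (Equation 2) has a solution in nonnegative integers $(x,y)$. For positive integers $a,b$ with $d=\gcd(a,b)$, $\Gamma(a,b)=1$ if Equation 1 with $(p,q)=(a/d,b/d)$ has a nonnegative integer solution, and $\Gamma(a,b)=2$ otherwise. *)

(* Defs.v *)
From mathcomp Require Import all_boot.
From Stdlib Require Import ClassicalEpsilon.
Set Implicit Arguments. Unset Strict Implicit. Unset Printing Implicit Defensive.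

(* Equation 1 for (p,q): p x + q y = (p-1)(q-1)/2 has a solution in
   nonnegative integers.  For coprime p,q, (p-1)(q-1) is even, so the
   nat division by 2 is exact. *)
Definition eq1_solvable (p q : nat) : Prop :=
  exists x y : nat, p * x + q * y = ((p - 1) * (q - 1)) %/ 2.

Definition Gamma (a b : nat) : nat :=
  let d := gcdn a b in
  if excluded_middle_informative (eq1_solvable (a %/ d) (b %/ d)) then 1 else 2.

Definition arith (a r n : nat) : nat := a + (n - 1) * r.

(* Main.v *)
Require Import Defs.
From mathcomp Require Import all_boot.
From mathcomp Require Import zify.
From Stdlib Require Import ZArith Lia Classical ClassicalEpsilon.

Lemma bez (p s : nat) : 0 < p -> coprime p s ->
  exists u v : Z, (u * Z.of_nat p + v * Z.of_nat s = 1)%Z.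
Proof.
move=> hp /eqP hc; case: (egcdnP s hp) => km kn h _.
rewrite hc in h; exists (Z.of_nat km), (- Z.of_nat kn)%Z; lia.
Qed.

Lemma canon (p s n : nat) : 0 < p -> coprime p s ->
  exists X Y : Z, (0 <= Y < Z.of_nat p /\
     Z.of_nat p * X + Z.of_nat s * Y = Z.of_nat n)%Z.
Proof.
move=> hp hc; have [u [v huv]] := @bez p s hp hc.
set P := Z.of_nat p; set S := Z.of_nat s; set N := Z.of_nat n.
have hP : (0 < P)%Z by rewrite /P; lia.
have hdm := Z.div_mod (N * v) P ltac:(lia).
have hb := Z.mod_pos_bound (N * v) P hP.
set k := Z.div (N * v) P in hdm; set Y := Z.modulo (N * v) P in hdm hb.
exists (N * u + S * k)%Z, Y; split; first lia.
have e : (N * v = P * k + Y)%Z by exact: hdm.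
have -> : (S * Y = S * (N * v) - S * P * k)%Z by rewrite e; ring.
transitivity (N * (u * P + v * S))%Z; first ring.
by rewrite huv; ring.
Qed.

Lemma crit (p s n : nat) (X Y : Z) : 0 < p -> coprime p s ->
  (0 <= Y < Z.of_nat p)%Z ->
  (Z.of_nat p * X + Z.of_nat s * Y = Z.of_nat n)%Z ->
  ((exists x y : nat, p * x + s * y = n) <-> (0 <= X)%Z).
Proof.
move=> hp hc hY hn; split.
- case=> x [y hxy].
  have [u [v huv]] := @bez p s hp hc.
  set P := Z.of_nat p in hY hn huv *; set S := Z.of_nat s in hn huv *.
  have e : (P * (Z.of_nat x - X) = S * (Y - Z.of_nat y))%Z by rewrite /P /S; lia.
  have ek : (Y - Z.of_nat y = P * (u * (Y - Z.of_nat y) + v * (Z.of_nat x - X)))%Z.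
    transitivity ((Y - Z.of_nat y) * (u * P + v * S))%Z; first by rewrite huv; ring.
    transitivity (P * u * (Y - Z.of_nat y) + v * (S * (Y - Z.of_nat y)))%Z; first ring.
    rewrite -e; ring.
  set k := (u * (Y - Z.of_nat y) + v * (Z.of_nat x - X))%Z in ek.
  have hk : (k <= 0)%Z by nia.
  have e2 : (P * (Z.of_nat x - X) = P * (S * k))%Z by rewrite e ek; ring.
  have e3 : (Z.of_nat x - X = S * k)%Z.
    apply: (Z.mul_reg_l _ _ P) => //; rewrite /P; lia.
  have : (0 <= S)%Z by rewrite /S; lia.
  nia.
- move=> hX; exists (Z.to_nat X), (Z.to_nat Y); lia.
Qed.

Definition E := eq1_solvable.

Lemma E_odd p q : odd p ->
  (E p q <-> exists x y : nat, p * x + q * y = p./2 * (q - 1)).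
Proof.
move=> hp; rewrite /E /eq1_solvable; have h := odd_double_half p; rewrite hp in h.
have -> : (p - 1) * (q - 1) %/ 2 = p./2 * (q - 1).
  rewrite -{1}h add1n subSS.
  by rewrite subn0 -muln2 mulnAC mulnK.
by [].
Qed.

Lemma E_sym p q : E p q <-> E q p.
Proof.
rewrite /E /eq1_solvable mulnC; split; case=> x [y h]; exists y, x; lia.
Qed.

Local Open Scope Z_scope.
Lemma zA (k s X Y : Z) : 1 <= s -> 0 <= Y < 2*k+1 -> (2*k+1)*X + s*Y = k*(s-1) ->
  (0 <= X <-> 0 <= X + k - Y).
Proof.
move=> hs hY e; split=> hX.
- have h0 := Z.mul_nonneg_nonneg (2*k+1) X ltac:(lia) hX.
  have h1 : s * Y <= s * k by nia.
  have : Y <= k by nia.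
  lia.
- destruct (Z.le_gt_cases 0 X) as [h|h]; first exact h; exfalso.
  have h1 : s * (Y - X - k) > 0 by nia.
  have : Y - X - k > 0 by nia.
  lia.
Qed.
Lemma zB (k s X Y : Z) : 1 <= s -> s < 2*k+1 -> 0 <= Y < 2*k+1 -> (2*k+1)*X + s*Y = k*(s-1) ->
  (0 <= X <-> ~ 0 <= X + Y - k).
Proof.
move=> hs hsp hY e; split=> hX.
- have h0 := Z.mul_nonneg_nonneg (2*k+1-s) X ltac:(lia) hX.
  have h1 : s * (X + Y) < s * k by nia.
  have : X + Y < k by nia.
  lia.
- destruct (Z.le_gt_cases 0 X) as [h|h]; first exact h; exfalso; apply: hX.
  have h1 : s * (X + Y) > s * (k - 1) by nia.
  have : X + Y > k - 1 by nia.
  lia.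
Qed.
Local Close Scope Z_scope.

Lemma L1 p s : odd p -> coprime p s -> 0 < s -> (E p (p + s) <-> E p s).
Proof.
move=> hodd hc hs; rewrite !E_odd //.
have hp : 0 < p by case: p hodd {hc}.
have hc2 : coprime p (p + s) by rewrite /coprime gcdnDl.
have h := odd_double_half p; rewrite hodd in h.
set k := p./2 in h *.
have [X [Y [hY hn]]] := @canon p s (k * (s - 1)) hp hc.
rewrite (@crit p s _ X Y hp hc hY hn).
have hp' : Z.of_nat p = (2 * Z.of_nat k + 1)%Z by clear -h; lia.
have hs1 : Z.of_nat (k * (s - 1)) = (Z.of_nat k * (Z.of_nat s - 1))%Z
  by clear -hs; nia.
have hn2 : (Z.of_nat p * (X + Z.of_nat k - Y) + Z.of_nat (p + s) * Y
            = Z.of_nat (k * (p + s - 1)))%Z.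
  have -> : Z.of_nat (k * (p + s - 1)) = (Z.of_nat k * (Z.of_nat p + Z.of_nat s - 1))%Z
    by clear -hp; nia.
  have -> : Z.of_nat (p + s) = (Z.of_nat p + Z.of_nat s)%Z by lia.
  rewrite hs1 in hn; clear -hn; nia.
rewrite (@crit p (p+s) _ _ Y hp hc2 hY hn2).
rewrite hs1 hp' in hn; rewrite hp' in hY.
symmetry; apply: (zA (Z.of_nat k) (Z.of_nat s) X Y) => //; lia.
Qed.

Lemma L2 p s : odd p -> coprime p s -> 0 < s -> s < p -> (E p s <-> ~ E p (p - s)).
Proof.
move=> hodd hc hs hsp; rewrite !E_odd //.
have hp : 0 < p by case: p hodd {hc hsp}.
have hc2 : coprime p (p - s).
  rewrite /coprime gcdnC.
  have e : gcdn (p - s) p = gcdn (p - s) s.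
    by rewrite -{2}(subnK (ltnW hsp)) gcdnDl.
  rewrite e gcdnC -gcdnDr subnK ?(ltnW hsp) //.
  by rewrite gcdnC.
have h := odd_double_half p; rewrite hodd in h.
set k := p./2 in h *.
have [X [Y [hY hn]]] := @canon p s (k * (s - 1)) hp hc.
rewrite (@crit p s _ X Y hp hc hY hn).
have hp' : Z.of_nat p = (2 * Z.of_nat k + 1)%Z by clear -h; lia.
have hs1 : Z.of_nat (k * (s - 1)) = (Z.of_nat k * (Z.of_nat s - 1))%Z
  by clear -hs; nia.
have hY2 : (0 <= 2 * Z.of_nat k - Y < Z.of_nat p)%Z by lia.
have hn2 : (Z.of_nat p * (X + Y - Z.of_nat k) + Z.of_nat (p - s) * (2 * Z.of_nat k - Y)
            = Z.of_nat (k * (p - s - 1)))%Z.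
  have -> : Z.of_nat (k * (p - s - 1)) = (Z.of_nat k * (Z.of_nat p - Z.of_nat s - 1))%Z
    by clear -hsp; nia.
  have -> : Z.of_nat (p - s) = (Z.of_nat p - Z.of_nat s)%Z by lia.
  rewrite hs1 hp' in hn *; clear -hn; nia.
rewrite (@crit p (p-s) _ _ _ hp hc2 hY2 hn2).
rewrite hs1 hp' in hn; rewrite hp' in hY.
apply: (zB (Z.of_nat k) (Z.of_nat s) X Y) => //; lia.
Qed.

Lemma copD P s : coprime P s -> coprime (P + s) s.
Proof. by rewrite /coprime [gcdn (P + s) s]gcdnC gcdnDr gcdnC. Qed.

Lemma copS P s : coprime P s -> coprime s P.
Proof. by rewrite /coprime gcdnC. Qed.

Arguments L1 {p s}.
Arguments L2 {p s}.
Arguments copD {P s}.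
Arguments copS {P s}.

Lemma alt P s : 0 < P -> 0 < s -> coprime P s ->
  (E P (P + s) <-> ~ E (P + s) (P + s + s)).
Proof.
move=> hP hs hc.
have hcQ := copD hc.
case hQ: (odd (P + s)).
- have e1 := E_sym P (P + s).
  have eP : P = P + s - s by rewrite addnK.
  have hlt : s < P + s by rewrite -{1}(add0n s) ltn_add2r.
  have e2 := L2 hQ hcQ hs hlt.
  rewrite -eP in e2.
  have e3 := L1 hQ hcQ hs.
  have := classic (E (P + s) s). tauto.
- have hPo : odd P /\ odd s.
    move: hQ; rewrite oddD.
    case hp: (odd P); case hs2: (odd s) => //= _.
    exfalso; move: hc; rewrite /coprime => /eqP hg.
    have : 2 %| gcdn P s by rewrite dvdn_gcd !dvdn2 hp hs2.
    by rewrite hg.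
  case: hPo => hPo hso.
  have hR : odd (P + s + s) by rewrite !oddD hPo hso.
  have e1 := L1 hPo hc hs.
  have e2 := E_sym P s.
  have e3 := L1 hso (copS hc) hP.
  have hc4 : coprime s (s + P) by rewrite /coprime gcdnDl; exact: copS.
  have e4 := L1 hso hc4 (ltn_addl _ hP).
  have e5 := E_sym s (s + (s + P)).
  have eq : s + (s + P) = P + s + s by lia.
  rewrite eq in e4 e5.
  have e6 := E_sym (P + s) (P + s + s).
  have hcR : coprime (P + s + s) s by apply: copD; apply: copD.
  have hlt : s < P + s + s by rewrite -{1}(add0n s) ltn_add2r addn_gt0 hP.
  have e7 := L2 hR hcR hs hlt.
  rewrite addnK in e7.
  have := classic (E (P + s + s) s). tauto.
Qed.

Lemma parity (e : nat -> Prop) :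
  (forall n, 1 <= n -> (e n <-> ~ e n.+1)) ->
  forall b : bool, (e 1 <-> b) -> forall n, 1 <= n -> (e n <-> (odd n = b)).
Proof.
move=> halt b h1; elim=> [//|n IH] _.
case: n IH => [|n] IH; first clear IH.
  case: b h1 => /= h1.
  - by split => // _; apply/h1.
  - by split => // H; have := proj1 h1 H.
move: (IH erefl) (halt n.+1 erefl) => A B; clear IH.
have C := classic (e n.+2).
move: A B; rewrite [odd n.+2]/= [odd n.+1]/=.
case: (odd n); case: b h1 => h1 /= A B; split => H; try done;
  first [ by exfalso; tauto | by tauto | idtac ].
all: try (move: A => [A1 A2]; have := A2 erefl; tauto).
all: case: C => // hc; have nA : ~ e n.+1 by move/(proj1 A).
all: tauto.
Qed.

Lemma GammaE g P Q : 0 < g -> coprime P Q ->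
  Gamma (g * P) (g * Q) =
  if excluded_middle_informative (eq1_solvable P Q) then 1 else 2.
Proof.
move=> hg hc; rewrite /Gamma -muln_gcdr (eqP hc) muln1 !mulKn //.
Qed.

Theorem theorem1p6 (a r : nat) (ha : 0 < a) (hr : 0 < r) :
  (forall n, 1 <= n ->
     Gamma (arith a r n) (arith a r n.+1) = (if odd n then 1 else 2)) \/
  (forall n, 1 <= n ->
     Gamma (arith a r n) (arith a r n.+1) = (if odd n then 2 else 1)).
Proof.
set g := gcdn a r.
have hg : 0 < g by rewrite gcdn_gt0 ha.
set p0 := a %/ g; set s := r %/ g.
have ha' : a = g * p0 by rewrite mulnC divnK // dvdn_gcdl.
have hr' : r = g * s by rewrite mulnC divnK // dvdn_gcdr.
have hc : coprime p0 s.
  have h := muln_gcdl p0 s g.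
  rewrite [p0 * g]mulnC [s * g]mulnC -ha' -hr' -/g in h.
  rewrite /coprime; apply/eqP; clear -h hg; nia.
have hp0 : 0 < p0 by clear -ha ha'; nia.
have hs : 0 < s by clear -hr hr'; nia.
pose P n := p0 + (n - 1) * s.
have hPn : forall n, arith a r n = g * P n.
  move=> n; rewrite /arith /P ha' hr'; clear; nia.
have hPS : forall n, 1 <= n -> P n.+1 = P n + s.
  move=> n hn; rewrite /P; clear -hn; nia.
have hcPs : forall n, coprime (P n) s.
  move=> n; rewrite /coprime gcdnC /P addnC gcdnMDl; exact: copS.
have hcPQ : forall n, 1 <= n -> coprime (P n) (P n.+1).
  move=> n hn; rewrite hPS // /coprime gcdnDl; exact: hcPs.
have hPpos : forall n, 0 < P n by move=> n; by rewrite /P addn_gt0 hp0.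
pose e n := eq1_solvable (P n) (P n.+1).
have halt : forall n, 1 <= n -> (e n <-> ~ e n.+1).
  move=> n hn; rewrite /e (hPS n hn) (hPS n.+1 isT) (hPS n hn).
  exact: alt.
have hG : forall n, 1 <= n -> Gamma (arith a r n) (arith a r n.+1) =
   if excluded_middle_informative (e n) then 1 else 2.
  move=> n hn; rewrite !hPn GammaE //; exact: hcPQ.
case: (classic (e 1)) => h1.
- left => n hn; have hp := @parity e halt true ltac:(by split) n hn.
  rewrite hG //; case: excluded_middle_informative => H; case: (odd n) hp => /= hp //;
    first [by have := proj1 hp H | by case: H; apply/hp].
- right => n hn; have hp := @parity e halt false ltac:(by split => // H; case: (h1 H)) n hn.
  rewrite hG //; case: excluded_middle_informative => H; case: (odd n) hp => /= hp //;
    first [by have := proj1 hp H | by case: H; apply/hp].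
Qed.
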